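(* Let $R$ be a commutative ring and $e\in R$ an idempotent. Then $R$ is locally stable if and only if both $eRe$ and $(1-e)R(1-e)$ are locally stable.
   Context: All rings are commutative with identity ($eRe=eR$ is a ring with identity $e$). A ring $S$ has stable range 1 if whenever $aS+bS=S$ there is $y\in S$ with $a+by$ a unit. $S$ is locally stable if whenever $a,b\in S$ with $aS+bS=S$ there is $y\in S$ such that $S/(a+by)S$ has stable range 1. *)

(* Defs.v *)
From HB Require Import structures.
From mathcomp Require Import all_boot all_algebra.
Set Implicit Arguments. Unset Strict Implicit. Unset Printing Implicit Defensive.
Import GRing.Theory.
Local Open Scope ring_scope.

(* Rings are commutative with identity; possibly trivial (0 = 1), hence
   comPzRingType.  Corner rings eRe and quotients S/cS may be the zero ring,
   which cannot be a MathComp (nonzero) ring type, so they are represented by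
   their carrier inside R together with the induced operations. *)

Section Defs.
Variable R : comPzRingType.

Definition cong_mod (c x y : R) : Prop := exists s : R, x - y = c * s.

Definition sr1_quot (c : R) : Prop :=
  forall a b : R,
    (exists x y : R, cong_mod c (a * x + b * y) 1) ->
    exists y : R, exists z : R, cong_mod c ((a + b * y) * z) 1.

Definition stable_range1 : Prop :=
  forall a b : R, (exists x y : R, a * x + b * y = 1) ->
    exists y : R, exists z : R, (a + b * y) * z = 1.

Definition locally_stable : Prop :=
  forall a b : R, (exists x y : R, a * x + b * y = 1) ->
    exists y : R, sr1_quot (a + b * y).

Definition in_corner (e x : R) : Prop := exists r : R, x = e * r * e.

Definition corner_cong_mod (e c x y : R) : Prop :=
  exists s : R, in_corner e s /\ x - y = c * s.

Definition corner_sr1_quot (e c : R) : Prop :=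
  forall a b : R, in_corner e a -> in_corner e b ->
    (exists x y : R, in_corner e x /\ in_corner e y /\
        corner_cong_mod e c (a * x + b * y) e) ->
    exists y : R, in_corner e y /\ exists z : R, in_corner e z /\
        corner_cong_mod e c ((a + b * y) * z) e.

Definition corner_locally_stable (e : R) : Prop :=
  forall a b : R, in_corner e a -> in_corner e b ->
    (exists x y : R, in_corner e x /\ in_corner e y /\ a * x + b * y = e) ->
    exists y : R, in_corner e y /\ corner_sr1_quot e (a + b * y).

End Defs.

(* Main.v *)
Require Import Defs.
From HB Require Import structures.
From mathcomp Require Import all_boot all_algebra.
From mathcomp Require Import ring.
Import GRing.Theory.
Local Open Scope ring_scope.

Set Implicit Arguments.
Section Aux.
Variable R : comPzRingType.

Lemma fwd_sr1 (e c : R) : e * e = e -> sr1_quot c -> corner_sr1_quot e (e * c).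
Proof.
move=> he hc a b [ra ->] [rb ->] [x [y [[rx ->] [[ry ->] [s [[rs ->] Hs]]]]]].
have [|y1 [z [t Ht]]] := hc (e*ra*e + (1 - e)) (e*rb*e).
  exists (e*rx*e + (1-e)), (e*ry*e); exists (e*rs*e).
  have -> : (e*ra*e + (1 - e)) * (e*rx*e + (1-e)) + e*rb*e*(e*ry*e) - 1
    = e*ra*e*(e*rx*e) + e*rb*e*(e*ry*e) - e by ring: he.
  rewrite Hs; ring: he.
exists (e*y1*e); split; first by exists y1.
exists (e*z*e); split; first by exists z.
exists (e*t*e); split; first by exists t.
have -> : (e * ra * e + e * rb * e * (e * y1 * e)) * (e * z * e) - e
   = e * ((e * ra * e + (1 - e) + e * rb * e * y1) * z - 1) by ring: he.
rewrite Ht; ring: he.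
Qed.

Lemma fwd_ls (e : R) : e * e = e -> locally_stable R -> corner_locally_stable e.
Proof.
move=> he hl a b [ra ->] [rb ->] [x [y [[rx ->] [[ry ->] Hxy]]]].
have [|y0 Hy0] := hl (e*ra*e + (1 - e)) (e*rb*e).
  exists (e*rx*e + (1-e)), (e*ry*e).
  have -> : (e*ra*e + (1 - e)) * (e*rx*e + (1-e)) + e*rb*e*(e*ry*e)
    = (e*ra*e*(e*rx*e) + e*rb*e*(e*ry*e)) + (1 - e) by ring: he.
  rewrite Hxy; ring.
exists (e*y0*e); split; first by exists y0.
have := fwd_sr1 he Hy0.
have -> : e * (e * ra * e + (1 - e) + e * rb * e * y0) = e * ra * e + e * rb * e * (e * y0 * e) by ring: he.
by [].
Qed.

Lemma bwd_sr1 (e c : R) : e * e = e -> corner_sr1_quot e (e * c) ->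
  corner_sr1_quot (1 - e) ((1 - e) * c) -> sr1_quot c.
Proof.
move=> he h1 h2 a b [x [y [s Hs]]].
have hf : (1 - e) * (1 - e) = 1 - e by ring: he.
have [|y1 [[r1 ->] [z1 [[q1 ->] [t1 [[p1 ->] H1]]]]]] := h1 (e*a*e) (e*b*e) (ex_intro _ a erefl) (ex_intro _ b erefl).
- exists (e*x*e), (e*y*e); do 2 (split; first by eexists).
  exists (e*s*e); split; first by eexists.
  have -> : e * a * e * (e * x * e) + e * b * e * (e * y * e) - e = e * (a * x + b * y - 1) by ring: he.
  rewrite Hs; ring: he.
have [|y2 [[r2 ->] [z2 [[q2 ->] [t2 [[p2 ->] H2]]]]]] := h2 ((1-e)*a*(1-e)) ((1-e)*b*(1-e)) (ex_intro _ a erefl) (ex_intro _ b erefl).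
- exists ((1-e)*x*(1-e)), ((1-e)*y*(1-e)); do 2 (split; first by eexists).
  exists ((1-e)*s*(1-e)); split; first by eexists.
  have -> : (1-e) * a * (1-e) * ((1-e) * x * (1-e)) + (1-e) * b * (1-e) * ((1-e) * y * (1-e)) - (1-e) = (1-e) * (a * x + b * y - 1) by ring: he.
  rewrite Hs; ring: he.
exists (e*r1*e + (1-e)*r2*(1-e)), (e*q1*e + (1-e)*q2*(1-e)).
exists (e*p1*e + (1-e)*p2*(1-e)).
have -> : (a + b * (e * r1 * e + (1 - e) * r2 * (1 - e))) * (e * q1 * e + (1 - e) * q2 * (1 - e)) - 1
  = ((e * a * e + e * b * e * (e * r1 * e)) * (e * q1 * e) - e)
  + (((1 - e) * a * (1 - e) + (1 - e) * b * (1 - e) * ((1 - e) * r2 * (1 - e))) * ((1 - e) * q2 * (1 - e)) - (1 - e)) by ring: he.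
rewrite H1 H2; ring: he.
Qed.

Lemma bwd_ls (e : R) : e * e = e -> corner_locally_stable e ->
  corner_locally_stable (1 - e) -> locally_stable R.
Proof.
move=> he h1 h2 a b [x [y Hxy]].
have hf : (1 - e) * (1 - e) = 1 - e by ring: he.
have [|y1 [[r1 ->] H1]] := h1 (e*a*e) (e*b*e) (ex_intro _ a erefl) (ex_intro _ b erefl).
- exists (e*x*e), (e*y*e); do 2 (split; first by eexists).
  transitivity (e * (a*x+b*y)); first by ring: he.
  by rewrite Hxy mulr1.
have [|y2 [[r2 ->] H2]] := h2 ((1-e)*a*(1-e)) ((1-e)*b*(1-e)) (ex_intro _ a erefl) (ex_intro _ b erefl).
- exists ((1-e)*x*(1-e)), ((1-e)*y*(1-e)); do 2 (split; first by eexists).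
  transitivity ((1-e) * (a*x+b*y)); first by ring: he.
  by rewrite Hxy mulr1.
exists (e*r1*e + (1-e)*r2*(1-e)).
apply: (bwd_sr1 he).
- have -> : e * (a + b * (e * r1 * e + (1 - e) * r2 * (1 - e))) = e * a * e + e * b * e * (e * r1 * e) by ring: he.
  exact: H1.
- have -> : (1 - e) * (a + b * (e * r1 * e + (1 - e) * r2 * (1 - e))) = (1-e) * a * (1-e) + (1-e) * b * (1-e) * ((1-e) * r2 * (1-e)) by ring: he.
  exact: H2.
Qed.

End Aux.

Theorem corollary2p8 (R : comPzRingType) (e : R) (he : e * e = e) :
  locally_stable R <->
  (corner_locally_stable e /\ corner_locally_stable (1 - e)).
Proof.
have hf : (1 - e) * (1 - e) = 1 - e by ring: he.
split.
- by move=> h; split; [exact: fwd_ls | exact: fwd_ls].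
- by case=> h1 h2; exact: (bwd_ls he).
Qed.
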